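(* Let $m\in\mathbb{N}$, $m\geq 2$, and let $T:[0,1)\to[0,1)$ be $T(x)=mx \bmod 1$. Let $A\subset[0,1)$ be a nowhere dense set with $T(A)\subset A$. Then for every $t\in(0,1)$ that has a universal $m$-adic expansion, we simultaneously have $$A-t\subset\mathbb{Q}^c,\qquad A+t\subset\mathbb{Q}^c,\qquad \frac{A}{t}\subset\mathbb{Q}^c.$$ Moreover, if $t\in(1,\infty)$ and $1/t$ has a universal $m$-adic expansion, then $tA\subset\mathbb{Q}^c$. In particular, for Lebesgue almost every $t\in(0,1)$ the inclusions $A-t\subset\mathbb{Q}^c$, $A+t\subset\mathbb{Q}^c$, $A/t\subset\mathbb{Q}^c$ hold.
   Context: An $m$-adic expansion of $t\in(0,1)$ is a sequence $(t_k)\in\{0,1,\dots,m-1\}^{\mathbb{N}}$ with $t=\sum_{k\geq1}t_k m^{-k}$. Such an expansion is universal if for every $k\geq1$ and every word $x_1\cdots x_k\in\{0,\dots,m-1\}^k$ there is $k_0\in\mathbb{N}$ with $t_{k_0+1}\cdots t_{k_0+k}=x_1\cdots x_k$; $t$ has a universal $m$-adic expansion if some $m$-adic expansion of it is universal. Notation: $A\pm t=\{x\pm t:x\in A\}$, $tA=\{tx:x\in A\setminus\{0\}\}$, $\frac{A}{t}=t^{-1}A=\{t^{-1}x:x\in A\setminus\{0\}\}$. $\mathbb{Q}^c$ denotes the set of irrational real numbers. *)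

(* Defs.v *)
From HB Require Import structures.
From mathcomp Require Import all_boot all_order all_algebra.
From mathcomp Require Import all_classical all_reals all_analysis.
Set Implicit Arguments. Unset Strict Implicit. Unset Printing Implicit Defensive.
Import Order.TTheory GRing.Theory Num.Theory.
Import numFieldNormedType.Exports.
Local Open Scope classical_set_scope.
Local Open Scope ring_scope.

Definition mmod1 {R : realType} (m : nat) (x : R) : R :=
  m%:R * x - (Num.floor (m%:R * x))%:~R.

Definition nowhere_dense {R : realType} (A : set R) : Prop :=
  interior (closure A) = set0.

Definition madic_expansion {R : realType} (m : nat) (d : nat -> nat) (t : R) : Prop :=
  (forall k, (d k < m)%N) /\
  ((fun n => \sum_(0 <= k < n) (d k)%:R / (m%:R ^+ k.+1)) @ \oo --> t).

Definition universal_seq (m : nat) (d : nat -> nat) : Prop :=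
  forall w : seq nat, all (fun x => (x < m)%N) w ->
    exists k0 : nat, forall i, (i < size w)%N -> d (k0 + i)%N = nth 0%N w i.

Definition has_universal_expansion {R : realType} (m : nat) (t : R) : Prop :=
  exists d, madic_expansion m d t /\ universal_seq m d.

(* Main.v *)
Require Import Defs.
From HB Require Import structures.
From mathcomp Require Import all_boot all_order all_algebra.
From mathcomp Require Import all_classical all_reals all_analysis.
Import Order.TTheory GRing.Theory Num.Theory.
Import numFieldNormedType.Exports.
Local Open Scope classical_set_scope.
Local Open Scope ring_scope.
From mathcomp Require Import ring lra zify.
From Stdlib Require Import Lia.
Set Implicit Arguments. Unset Strict Implicit. Unset Printing Implicit Defensive.

Section Basics.
Variable R : realType.
Definition fr (y : R) : R := y - (Num.floor y)%:~R.

Lemma fr_ge0 y : 0 <= fr y.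
Proof. by rewrite /fr subr_ge0 floor_le. Qed.

Lemma fr_lt1 y : fr y < 1.
Proof. have := floorD1_gt y; rewrite intrD /fr; lra. Qed.

Lemma frDz y (z : int) : fr (y + z%:~R) = fr y.
Proof. by rewrite /fr floorDrz ?intr_int // intrKfloor intrD opprD addrACA subrr addr0. Qed.

Lemma fr_eq y (k : int) : k%:~R <= y < (k+1)%:~R -> fr y = y - k%:~R.
Proof. by move=> h; rewrite /fr (floor_def h). Qed.

Lemma fr_id y : 0 <= y < 1 -> fr y = y.
Proof. by move=> h; rewrite (@fr_eq y 0) ?subr0 //= add0r. Qed.

Lemma frMn (n : nat) y : fr (n%:R * fr y) = fr (n%:R * y).
Proof.
have e : n%:R * fr y = n%:R * y + (- (n%:Z * Num.floor y))%:~R.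
  by rewrite /fr intrN intrM mulrBr.
by rewrite e frDz.
Qed.

Lemma orbitA (m : nat) (A : set R) x :
  A `<=` [set x | 0 <= x < 1] -> mmod1 m @` A `<=` A -> A x ->
  forall n, A (fr (m%:R ^+ n * x)).
Proof.
move=> sA TA Ax; elim=> [|n IH].
  by rewrite expr0 mul1r fr_id //; exact: sA.
rewrite exprS -mulrA -frMn; apply: TA; by exists (fr (m%:R ^+ n * x)).
Qed.
End Basics.

Section ND.
Variable R : realType.

Lemma maxE (a b : R) : exists c, [/\ a <= c, b <= c & (c = a \/ c = b)].
Proof. case: (leP a b) => h; [exists b|exists a]; split=> //; [right|exact: ltW|left]; by []. Qed.
Lemma minE (a b : R) : exists c, [/\ c <= a, c <= b & (c = a \/ c = b)].
Proof. case: (leP a b) => h; [exists a|exists b]; split=> //; [left|exact: ltW|right]; by []. Qed.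

Lemma nd_itv (A : set R) : nowhere_dense A -> forall v v', v < v' ->
  exists w w', [/\ v <= w, w < w', w' <= v' & forall u, w < u < w' -> ~ A u].
Proof.
move=> nd v v' vv'.
apply: contrapT => H.
have : interior (closure A) ((v + v') / 2).
  rewrite /interior.
  apply/nbhs_ballP; exists ((v' - v) / 2) => /=; first lra.
  move=> z; rewrite -ball_normE /= ltr_distlC => /andP [hz1 hz2] B.
  move=> /nbhs_ballP [e /= e0 hB].
  have [c1 [h1 h2 h3]] := maxE v (z - e).
  have [c2 [h4 h5 h6]] := minE v' (z + e).
  have [u [hu Au]] : exists u, (c1 < u < c2) /\ A u.
    apply: contrapT => H2; apply: H; exists c1, c2; split => //.
    - by case: h3 => ->; case: h6 => ->; lra.
    - by move=> u hu Au; apply: H2; exists u.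
  exists u; split => //; apply: hB; rewrite -ball_normE /= ltr_distlC.
  by move: hu => /andP [] ? ?; apply/andP; split; lra.
by rewrite /nowhere_dense in nd; rewrite nd.
Qed.

Lemma nd_fr (A : set R) : nowhere_dense A -> forall lo hi, lo < hi ->
  exists w w', [/\ lo <= w, w < w', w' <= hi & forall u, w < u < w' -> ~ A (fr u)].
Proof.
move=> nd lo hi lh.
set K := Num.floor lo.
have hK := floor_itv lo; rewrite -/K intrD in hK.
have [c [h1 h2 h3]] := minE hi (K%:~R + 1).
have [w0 [w0' [a1 a2 a3 a4]]] := nd_itv nd (v := lo - K%:~R) (v' := c - K%:~R) ltac:(case: h3 => ->; move: hK => /andP[]; lra).
exists (w0 + K%:~R), (w0' + K%:~R); split; try lra.
move=> u /andP [u1 u2]; rewrite (@fr_eq _ u K); last first.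
  rewrite intrD; apply/andP; split; move: hK => /andP[]; lra.
apply: a4; apply/andP; split; lra.
Qed.
End ND.

Section Core.
Variable R : realType.

Lemma shrink1 (A : set R) (b k : R) : nowhere_dense A -> b != 0 ->
  forall a a', a < a' -> exists c c', [/\ a <= c, c < c', c' <= a' &
    forall y, c < y < c' -> ~ A (fr (k + b * y))].
Proof.
move=> nd b0 a a' aa'.
move: b0; rewrite neq_lt => /orP [bn|bp].
- have lh : k + b * a' < k + b * a by nra.
  have [w [w' [h1 h2 h3 h4]]] := nd_fr nd lh.
  set c := (w' - k) / b; set c' := (w - k) / b.
  have hc : b * c = w' - k by rewrite /c mulrC divfK // lt_eqF.
  have hc' : b * c' = w - k by rewrite /c' mulrC divfK // lt_eqF.
  exists c, c'; split; try nra.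
  move=> y /andP [y1 y2]; apply: h4; apply/andP; split; nra.
- have lh : k + b * a < k + b * a' by nra.
  have [w [w' [h1 h2 h3 h4]]] := nd_fr nd lh.
  set c := (w - k) / b; set c' := (w' - k) / b.
  have hc : b * c = w - k by rewrite /c mulrC divfK // gt_eqF.
  have hc' : b * c' = w' - k by rewrite /c' mulrC divfK // gt_eqF.
  exists c, c'; split; try nra.
  move=> y /andP [y1 y2]; apply: h4; apply/andP; split; nra.
Qed.

Lemma shrinkL (A : set R) (b : R) (q : nat) : nowhere_dense A -> b != 0 ->
  forall (L : seq nat) a a', a < a' -> exists c c', [/\ a <= c, c < c', c' <= a' &
    forall y, c < y < c' -> forall j, j \in L -> ~ A (fr (j%:R / q%:R + b * y))].
Proof.
move=> nd b0; elim=> [|j L IH] a a' aa'.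
  by exists a, a'; split.
have [c [c' [h1 h2 h3 h4]]] := shrink1 (j%:R / q%:R) nd b0 aa'.
have [e [e' [g1 g2 g3 g4]]] := IH _ _ h2.
exists e, e'; split; try lra.
move=> y hy i; rewrite in_cons => /orP [/eqP ->|iL]; last exact: g4.
apply: h4; move: hy => /andP [] ? ?; apply/andP; split; lra.
Qed.

Lemma core (A : set R) (b : R) (q : nat) (tau : nat -> R) :
  nowhere_dense A -> b != 0 ->
  (forall a a', 0 <= a -> a < a' -> a' <= 1 -> exists n, a < tau n < a') ->
  (forall n, exists j, (j < q)%N /\ A (fr (j%:R / q%:R + b * tau n))) -> False.
Proof.
move=> nd b0 dens hA.
have [c [c' [h1 h2 h3 h4]]] := shrinkL q nd b0 (iota 0 q) (ltr01 : (0:R) < 1).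
have [n hn] := dens c c' h1 h2 h3.
have [j [jq Aj]] := hA n.
by apply: (h4 _ hn j); rewrite ?mem_iota.
Qed.

Lemma frz (z : int) (q : nat) (y : R) : (0 < q)%N ->
  exists j, (j < q)%N /\ fr (z%:~R / q%:R + y) = fr (j%:R / q%:R + y).
Proof.
move=> q0.
have r0 : 0 <= (z %% q)%Z by rewrite modz_ge0 // -lt0n.
have rq : (z %% q)%Z < q%:Z by rewrite ltz_pmod.
have hz := divz_eq z q.
move: r0 rq hz; case: (z %% q)%Z => [j|j] // _ rq hz.
exists j; split; first by [].
have -> : z%:~R / q%:R + y = j%:R / q%:R + y + (z %/ q)%Z%:~R :> R.
  rewrite {1}hz intrD intrM /=.
  have qR : q%:R != 0 :> R by rewrite pnatr_eq0 -lt0n.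
  field.
  done.
by rewrite frDz.
Qed.
End Core.

Section Dens.
Variable R : realType.

Definition visits (m : nat) (tau : nat -> R) := forall k v, (v < m ^ k)%N ->
  exists n, v%:R / (m%:R ^+ k) <= tau n <= v.+1%:R / (m%:R ^+ k).

Lemma floor_nat (x : R) : 0 <= x -> exists f : nat, f%:R <= x < f.+1%:R.
Proof.
move=> x0; have := floor_itv x; have := floor_ge0 x; rewrite x0.
case: (Num.floor x) => [f|f] // _ h; exists f.
by move: h; rewrite intrD /= -natr1.
Qed.

Lemma dens (m : nat) (tau : nat -> R) : (1 < m)%N -> visits m tau ->
  forall a a', 0 <= a -> a < a' -> a' <= 1 -> exists n, a < tau n < a'.
Proof.
move=> m1 vis a a' a0 aa' a1.
have ha : 0 < a' - a by lra.
have [k /andP [_ hk]] := floor_nat (ltW (divr_gt0 (ltr0Sn R 1) ha)).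
set k1 := k.+1 in hk.
set M : R := m%:R ^+ k1.
have Mk : k1%:R < M by rewrite /M -natrX ltr_nat ltn_expl.
have M0 : 0 < M by apply: lt_trans Mk; rewrite ltr0n.
have hk' : 2 < (a' - a) * k1%:R.
  by move: hk; rewrite ltr_pdivrMr ?subr_gt0 // mulrC.
have [f /andP [f1 f2]] := floor_nat (mulr_ge0 a0 (ltW M0)).
have vM : (f.+1 < m ^ k1)%N.
  rewrite -(ltr_nat R) natrX -/M; rewrite -!natr1 in f2 *; nra.
have [n /andP [t1 t2]] := vis k1 f.+1 vM.
exists n; rewrite -/M in t1 t2.
move: t1 t2; rewrite ler_pdivrMr // ler_pdivlMr // => t1 t2.
rewrite -!natr1 in f2 t1 t2.
apply/andP; split; nra.
Qed.
End Dens.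

Section Main.
Variable R : realType.
Lemma intrXm (m n : nat) : ((m%:Z ^+ n)%:~R : R) = m%:R ^+ n.
Proof. by rewrite rmorphXn. Qed.

Lemma noratl (A : set R) (m : nat) (s : R) (Nn : nat -> int) (x r b : R) :
  (1 < m)%N -> nowhere_dense A -> A `<=` [set x | 0 <= x < 1] ->
  mmod1 m @` A `<=` A -> A x ->
  visits m (fun n => m%:R ^+ n * s - (Nn n)%:~R) -> rational r ->
  [\/ x = r + s /\ b = 1, x = r - s /\ b = -1 | (x = r * s /\ b = r /\ r != 0)] -> False.
Proof.
move=> m1 nd sA TA Ax vis [rho _ <-] hx.
set tau := fun n => m%:R ^+ n * s - (Nn n)%:~R.
have dn := dens m1 vis.
rewrite /ratr in hx.
have := denq_gt0 rho; case: (denq rho) hx => [q|q] // hx q0.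
set p := numq rho in hx.
have qR : q%:R != 0 :> R by rewrite pnatr_eq0 -lt0n.
have b0 : b != 0 by case: hx => [[_ ->]|[_ ->]|[_ [-> h]]]; rewrite ?oppr_eq0 ?oner_eq0.
apply: (core (q := q) nd b0 dn) => n.
have hA := orbitA sA TA Ax n.
have [z hz] : exists z : int, m%:R ^+ n * x = z%:~R / q%:R + b * tau n.
  case: hx => [[-> ->]|[-> ->]|[-> [-> _]]].
  - exists (p * (m%:Z ^+ n) + q%:Z * Nn n); rewrite /tau intrD !intrM intrXm /=; by field.
  - exists (p * (m%:Z ^+ n) + - (q%:Z * Nn n)); rewrite /tau intrD intrN !intrM intrXm /=; by field.
  - exists (p * Nn n); rewrite /tau !intrM /=; by field.
have [j [jq hj]] := frz (R:=R) z (q:=q) (b * tau n) ltac:(by rewrite lt0n; apply/eqP => q00; move: qR; rewrite q00 eqxx).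
by exists j; split => //; move: hA; rewrite hz hj.
Qed.
End Main.

Section NatS.
Local Open Scope nat_scope.
Fixpoint wval (m : nat) (w : seq nat) : nat :=
  if w is a :: w' then (a * m ^ size w' + wval m w')%N else 0%N.
Fixpoint dig (m k v : nat) : seq nat :=
  if k is k'.+1 then (v %/ m ^ k')%N :: dig m k' (v %% m ^ k')%N else [::].

Lemma size_dig m k v : size (dig m k v) = k.
Proof. by elim: k v => //= k IH v; rewrite IH. Qed.

Lemma dig_ok m k v : (0 < m)%N -> (v < m ^ k)%N ->
  all (fun x => (x < m)%N) (dig m k v) /\ wval m (dig m k v) = v.
Proof.
move=> m0; elim: k v => [|k IH] v /=; first by rewrite expn0 ltnS leqn0 => /eqP ->.
move=> vk.
have mk : (0 < m ^ k)%N by rewrite expn_gt0 m0.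
have [h1 h2] := IH (v %% m ^ k) (ltn_pmod _ mk).
rewrite h1 h2 size_dig -divn_eq andbT; split=> //.
by rewrite ltn_divLR // -expnS.
Qed.

Fixpoint Nd (m : nat) (d : nat -> nat) (n : nat) : nat :=
  if n is n'.+1 then (m * Nd m d n' + d n')%N else 0%N.

Lemma Nd_bounds m d : (forall k, (d k < m)%N) -> forall n j,
  (m ^ j * Nd m d n <= Nd m d (n + j) < m ^ j * (Nd m d n).+1)%N.
Proof.
move=> hd n; elim=> [|j IH]; first by rewrite addn0 expn0 !mul1n leqnn ltnSn.
rewrite addnS /= expnS.
move: IH (hd (n + j)%N); set P := (m ^ j)%N; set a := Nd m d n; set b := Nd m d (n + j).
move=> /andP [h1 h2] h3; apply/andP; split; nia.
Qed.

End NatS.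

Section Exp.
Variable R : realType.

Lemma S_eq (m : nat) (d : nat -> nat) n : (0 < m)%N ->
  \sum_(0 <= k < n) (d k)%:R / (m%:R ^+ k.+1) = (Nd m d n)%:R / (m%:R ^+ n) :> R.
Proof.
move=> m0; have mR : m%:R != 0 :> R by rewrite pnatr_eq0 -lt0n.
elim: n => [|n IH]; first by rewrite big_geq // mul0r.
rewrite big_nat_recr //= IH natrD natrM exprS.
have mn : m%:R ^+ n != 0 :> R by rewrite expf_neq0.
by field; apply/andP.
Qed.

Definition taud (m : nat) (d : nat -> nat) (s : R) n := m%:R ^+ n * s - (Nd m d n)%:R.

Lemma taud_rec m d s n : taud m d s n.+1 = m%:R * taud m d s n - (d n)%:R.
Proof. rewrite /taud /= natrD natrM exprS; ring. Qed.

Lemma taud_bnd m d s : (1 < m)%N -> madic_expansion m d s ->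
  forall n, 0 <= taud m d s n <= 1.
Proof.
move=> m1 [hd hcv] n.
have m0 : (0 < m)%N by apply: ltnW.
have Mn : 0 < m%:R ^+ n :> R by rewrite exprn_gt0 // ltr0n.
have : [set` `[(Nd m d n)%:R / m%:R ^+ n, (Nd m d n).+1%:R / m%:R ^+ n]] s.
  set S := fun i => \sum_(0 <= k < i) (d k)%:R / (m%:R ^+ k.+1) : R.
  have hcv' : S @ \oo --> s := hcv.
  have hc := @itv_closed _ R ((Nd m d n)%:R / m%:R ^+ n) ((Nd m d n).+1%:R / m%:R ^+ n).
  apply: (closed_cvg (u_ := S) _ hc _ _ hcv').
  exists n => // i /= hi.
  rewrite /S S_eq // in_itv /=.
  have := Nd_bounds hd n (i - n); rewrite subnKC //.
  move=> /andP [h1 h2].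
  have e : m%:R ^+ i = m%:R ^+ n * m%:R ^+ (i - n) :> R by rewrite -exprD subnKC.
  have Mj : 0 < m%:R ^+ (i - n) :> R by rewrite exprn_gt0 // ltr0n.
  rewrite e; apply/andP; split.
  - rewrite ler_pdivlMr ?mulr_gt0 // mulrA divfK ?gt_eqF //.
    by rewrite -natrX -natrM ler_nat mulnC.
  - rewrite ler_pdivrMr ?mulr_gt0 // mulrA divfK ?gt_eqF //.
    by rewrite -natrX -natrM ler_nat mulnC ltnW.
rewrite /= in_itv /= => /andP [h1 h2].
move: h1 h2; rewrite ler_pdivrMr // ler_pdivlMr // => h1 h2.
rewrite -natr1 in h2; rewrite /taud; apply/andP; split; rewrite mulrC; lra.
Qed.

Lemma taud_word m d s : (0 < m)%N -> forall w n, (forall i, (i < size w)%N -> d (n + i)%N = nth 0%N w i) ->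
  taud m d s n = (wval m w)%:R / m%:R ^+ size w + taud m d s (n + size w) / m%:R ^+ size w.
Proof.
move=> m0.
have mR : m%:R != 0 :> R by rewrite pnatr_eq0 -lt0n.
elim=> [|a w IH] n hw /=; first by rewrite addn0 expr0 !divr1 add0r.
have ha : d n = a by have := hw 0%N isT; rewrite addn0.
have hw' : forall i, (i < size w)%N -> d (n.+1 + i)%N = nth 0%N w i.
  by move=> i hi; rewrite addSnnS; exact: (hw i.+1 hi).
have := IH n.+1 hw'; rewrite taud_rec ha => e.
have Mk : m%:R ^+ size w != 0 :> R by rewrite expf_neq0.
rewrite addnS -addSn natrD natrM exprS.
have -> : taud m d s n = ((m%:R * taud m d s n - a%:R) + a%:R) / m%:R :> R by field.
rewrite e natrX; field; apply/andP; split => //.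
Qed.
End Exp.

Section P12.
Variable R : realType.

Lemma univ_visits m d (s : R) : (1 < m)%N -> madic_expansion m d s -> universal_seq m d ->
  visits m (taud m d s).
Proof.
move=> m1 hexp huniv k v hv.
have m0 : (0 < m)%N by apply: ltnW.
have [hall hval] := dig_ok m0 hv.
have [k0 hk0] := huniv _ hall.
have e := taud_word s m0 hk0.
exists k0; rewrite e size_dig hval.
have := taud_bnd m1 hexp (k0 + k); set tt := taud m d s (k0 + k).
have M0 : 0 < m%:R ^+ k :> R by rewrite exprn_gt0 // ltr0n.
move=> /andP [t0 t1].
have h1 : 0 <= tt / m%:R ^+ k by rewrite divr_ge0 // ltW.
have h2 : tt / m%:R ^+ k <= 1 / m%:R ^+ k by rewrite ler_pM2r // invr_gt0.
have -> : v.+1%:R / m%:R ^+ k = v%:R / m%:R ^+ k + 1 / m%:R ^+ k :> R by rewrite -natr1 mulrDl.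
apply/andP; split; lra.
Qed.

Lemma part12 (m : nat) (A : set R) :
  (2 <= m)%N ->
  A `<=` [set x | 0 <= x < 1] ->
  nowhere_dense A ->
  mmod1 m @` A `<=` A ->
  (forall t : R, 0 < t < 1 -> has_universal_expansion m t ->
     (forall x, A x -> (@irrational R) (x - t)) /\
     (forall x, A x -> (@irrational R) (x + t)) /\
     (forall x, A x -> x != 0 -> (@irrational R) (x / t))) /\
  (forall t : R, 1 < t -> has_universal_expansion m t^-1 ->
     forall x, A x -> x != 0 -> (@irrational R) (t * x)).
Proof.
move=> m1 sA nd TA; split.
- move=> t /andP [t0 t1] [d [hexp huniv]].
  have vis := univ_visits m1 hexp huniv.
  split; [|split].
  + move=> x Ax hr.
    apply: (noratl (Nn := fun n => (Nd m d n)%:Z) (s := t) (b := 1) m1 nd sA TA Ax vis hr).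
    by apply: Or31; split => //; ring.
  + move=> x Ax hr.
    apply: (noratl (Nn := fun n => (Nd m d n)%:Z) (s := t) (b := -1) m1 nd sA TA Ax vis hr).
    by apply: Or32; split => //; ring.
  + move=> x Ax x0 hr.
    apply: (noratl (Nn := fun n => (Nd m d n)%:Z) (s := t) (b := x / t) m1 nd sA TA Ax vis hr).
    apply: Or33; split; first by rewrite divfK // gt_eqF.
    by split => //; rewrite mulf_neq0 // invr_eq0 gt_eqF.
- move=> t t1 [d [hexp huniv]] x Ax x0 hr.
  have vis := univ_visits m1 hexp huniv.
  have t0 : t != 0 by rewrite gt_eqF // (lt_trans ltr01 t1).
  apply: (noratl (Nn := fun n => (Nd m d n)%:Z) (s := t^-1) (b := t * x) m1 nd sA TA Ax vis hr).
  apply: Or33; split; first by rewrite mulrAC divff // mul1r.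
  by split => //; rewrite mulf_neq0.
Qed.
End P12.

Fixpoint Vs (K v J : nat) : seq nat :=
  if J is J'.+1 then
    [seq (a * K ^ J' + u)%N | a <- iota 0 v ++ iota v.+1 (K - v.+1), u <- Vs K v J']
  else [:: 0%N].

Lemma size_Vs K v J : (v < K)%N -> size (Vs K v J) = ((K - 1) ^ J)%N.
Proof.
move=> vK; elim: J => [|J IH] //=.
rewrite size_allpairs size_cat !size_iota IH expnS; congr (_ * _)%N; lia.
Qed.

Section Cover.
Variable R : realType.

Lemma coverV (K v : nat) : (v < K)%N -> forall J (t : R), 0 <= t < 1 ->
  (forall i, (i < J)%N -> Num.floor (K%:R * fr (K%:R ^+ i * t)) != v%:Z) ->
  exists u, u \in Vs K v J /\ u%:R <= t * K%:R ^+ J < u.+1%:R.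
Proof.
move=> vK; elim=> [|J IH] t ht hJ.
  by exists 0%N; rewrite expr0 mulr1 mem_seq1 eqxx /=; split => //; rewrite -natr1 add0r; apply/andP; split.
have K0 : 0 < K%:R :> R by rewrite ltr0n; apply: leq_ltn_trans vK.
move: ht => /andP [t0 t1].
have [a /andP [a1 a2]] := floor_nat (mulr_ge0 (ltW K0) t0 : 0 <= K%:R * t).
have haK : (a < K)%N.
  by rewrite -(ltr_nat R); apply: le_lt_trans a1 _; rewrite -[X in _ < X]mulr1 ltr_pM2l.
have hfa : Num.floor (K%:R * t) = a%:Z.
  by apply: floor_def; rewrite intrD /=; change ((a%:R : R) <= K%:R * t < a%:R + 1); rewrite natr1 a1 a2.
have hav : a != v.
  have := hJ 0%N isT; rewrite expr0 mul1r fr_id ?t0 // hfa.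
  by apply: contra => /eqP ->.
set t' := fr (K%:R * t).
have ht' : t' = K%:R * t - a%:R by rewrite /t' /fr hfa.
have h' : 0 <= t' < 1 by rewrite fr_ge0 fr_lt1.
have hJ' : forall i, (i < J)%N -> Num.floor (K%:R * fr (K%:R ^+ i * t')) != v%:Z.
  move=> i hi; rewrite /t' -natrX frMn natrX mulrA -exprSr.
  exact: hJ i.+1 hi.
have [u' [hu' /andP [u1 u2]]] := IH t' h' hJ'.
exists (a * K ^ J + u')%N; split.
  apply: allpairs_f => //.
  rewrite mem_cat !mem_iota /=.
  have [h|h] : (a < v)%N \/ (v < a)%N by move: hav => /eqP; lia.
  by rewrite h.
  by rewrite subnKC // h haK orbT.
rewrite natrD natrM natrX exprS mulrA -[t * _](mulrC) ht' in u1 u2 *.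
rewrite -natr1 in u2 *.
rewrite mulrBl in u1 u2.
rewrite -natr1 natrD natrM natrX; apply/andP; split; lra.
Qed.
End Cover.

Section Meas.
Variable R : realType.

Definition Itv (M : R) (u : nat) : set R := [set` `[u%:R / M, u.+1%:R / M]].

Definition Cov (K v J : nat) : set R :=
  \big[setU/set0]_(u <- Vs K v J) Itv (K%:R ^+ J) u.

Lemma Cov_meas K v J : measurable (Cov K v J).
Proof. by apply: bigsetU_measurable => u _; exact: measurable_itv. Qed.

Lemma Itv_mu (M : R) u : 0 < M -> lebesgue_measure (Itv M u) = (1 / M)%:E.
Proof.
move=> M0; rewrite /Itv lebesgue_measure_itv /= lte_fin ltr_pM2r ?invr_gt0 // ltr_nat ltnSn.
by rewrite -EFinB -natr1 mulrDl addrAC subrr add0r.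
Qed.

Lemma bigU_mu (M : R) (s : seq nat) : 0 < M ->
  (lebesgue_measure (\big[setU/set0]_(u <- s) Itv M u) <= ((size s)%:R * (1 / M))%:E)%E.
Proof.
move=> M0; elim: s => [|a s IH]; first by rewrite big_nil measure0 mul0r.
rewrite big_cons.
apply: le_trans (measureU2 _ _ _) _.
- exact: measurable_itv.
- by apply: bigsetU_measurable => u _; exact: measurable_itv.
rewrite /= -natr1 mulrDl mul1r EFinD addeC.
have h1 : lebesgue_measure (Itv M a) = (1 / M)%:E by rewrite Itv_mu.
apply: leeD => //; [by rewrite h1 | by move: IH; rewrite mul1r].
Qed.

Lemma in_bigU (T : Type) (s : seq nat) (F : nat -> set T) u x :
  u \in s -> F u x -> (\big[setU/set0]_(i <- s) F i) x.
Proof.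
elim: s => [|a s IH] //; rewrite big_cons in_cons => /orP [/eqP <-|us] hx.
  by left.
by right; apply: IH.
Qed.

Lemma B_negl (K v : nat) : (v < K)%N ->
  (@lebesgue_measure R).-negligible
    [set t : R | 0 <= t < 1 /\ forall i, Num.floor (K%:R * fr (K%:R ^+ i * t)) != v%:Z].
Proof.
move=> vK; have K0 : (0 < K)%N by apply: leq_ltn_trans vK.
have KR : 0 < K%:R :> R by rewrite ltr0n.
set N := \bigcap_J Cov K v J.
have mN : measurable N by apply: bigcapT_measurable => J; exact: Cov_meas.
exists N; split => //; last first.
  move=> t [ht hi] J.
  have [u [hu /andP [u1 u2]]] := @coverV R K v vK J t ht (fun i _ => hi i).
  move=> _; apply: (in_bigU (F := Itv (K%:R ^+ J)) hu); rewrite /Itv /= in_itv /=.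
  have MJ : 0 < K%:R ^+ J :> R by rewrite exprn_gt0.
  by rewrite ler_pdivrMr // ler_pdivlMr // u1 ltW.
set r : R := (K - 1)%:R / K%:R.
have bound : forall J, (lebesgue_measure N <= (r ^+ J)%:E)%E.
  move=> J.
  have MJ : 0 < K%:R ^+ J :> R by rewrite exprn_gt0.
  have h1 := bigU_mu (Vs K v J) MJ.
  have h2 : (lebesgue_measure N <= lebesgue_measure (Cov K v J))%E.
    apply: le_measure; rewrite ?inE //; first exact: Cov_meas.
    by move=> t; apply.
  have h3 : ((size (Vs K v J))%:R * (1 / K%:R ^+ J)) = r ^+ J.
    by rewrite size_Vs // natrX mul1r /r exprMn exprVn.
  rewrite -h3; exact: le_trans h2 h1.
have hr : `|r| < 1.
  rewrite ger0_norm; last by rewrite /r divr_ge0 // ler0n.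
  by rewrite /r ltr_pdivrMr // mul1r ltr_nat; lia.
apply/eqP; rewrite eq_le measure_ge0 andbT; apply/lee_addgt0Pr => e e0; rewrite add0e.
have := cvgr0_norm_lt _ (cvg_expr hr) e e0.
case=> J _ hJ.
apply: le_trans (bound J) _; rewrite lee_fin.
apply: le_trans (ler_norm _) (ltW (hJ J _)) => /=.
by [].
Qed.
End Meas.

Section P3.
Variable R : realType.

Lemma concl_vis (m : nat) (A : set R) (t : R) (Nn : nat -> int) :
  (1 < m)%N -> A `<=` [set x | 0 <= x < 1] -> nowhere_dense A -> mmod1 m @` A `<=` A ->
  0 < t -> visits m (fun n => m%:R ^+ n * t - (Nn n)%:~R) ->
     (forall x, A x -> (@irrational R) (x - t)) /\
     (forall x, A x -> (@irrational R) (x + t)) /\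
     (forall x, A x -> x != 0 -> (@irrational R) (x / t)).
Proof.
move=> m1 sA nd TA t0 vis.
split; [|split].
+ move=> x Ax hr.
  apply: (noratl (Nn := Nn) (s := t) (b := 1) m1 nd sA TA Ax vis hr).
  by apply: Or31; split => //; ring.
+ move=> x Ax hr.
  apply: (noratl (Nn := Nn) (s := t) (b := -1) m1 nd sA TA Ax vis hr).
  by apply: Or32; split => //; ring.
+ move=> x Ax x0 hr.
  apply: (noratl (Nn := Nn) (s := t) (b := x / t) m1 nd sA TA Ax vis hr).
  apply: Or33; split; first by rewrite divfK // gt_eqF.
  by split => //; rewrite mulf_neq0 // invr_eq0 gt_eqF.
Qed.

Lemma good_vis (m : nat) (t : R) : (1 < m)%N ->
  (forall k v, (v < m ^ k)%N -> exists i,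
      Num.floor ((m ^ k)%N%:R * fr (((m ^ k)%N%:R) ^+ i * t)) = v%:Z) ->
  visits m (fun n => m%:R ^+ n * t - (Num.floor (m%:R ^+ n * t))%:~R).
Proof.
move=> m1 good k v hv.
have [i hi] := good k v hv.
exists (k * i)%N.
rewrite exprM -natrX -/(fr _).
set y := fr _.
have M0 : 0 < (m ^ k)%N%:R :> R by rewrite ltr0n expn_gt0 ltnW.
have := floor_itv ((m ^ k)%N%:R * y); rewrite hi intrD /= => /andP [h1 h2].
rewrite natrX in M0 h1 h2 *.
rewrite ler_pdivrMr // ler_pdivlMr //.
rewrite -natr1; apply/andP; split; rewrite mulrC; lra.
Qed.

Definition Bset (m k v : nat) : set R :=
  [set t : R | (v < m ^ k)%N /\ 0 <= t < 1 /\
    forall i, Num.floor ((m ^ k)%N%:R * fr (((m ^ k)%N%:R) ^+ i * t)) != v%:Z].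

Lemma Bset_negl m k v : (@lebesgue_measure R).-negligible (Bset m k v).
Proof.
case: (ltnP v (m ^ k)) => hv.
  apply: (negligibleS _ (@B_negl R _ _ hv)).
  by move=> t [_ [ht hi]]; split.
apply: (negligibleS _ (negligible_set0 _)).
by move=> t [h _]; move: hv; rewrite leqNgt h.
Qed.

Lemma part3 (m : nat) (A : set R) :
  (2 <= m)%N ->
  A `<=` [set x | 0 <= x < 1] ->
  nowhere_dense A ->
  mmod1 m @` A `<=` A ->
  (@lebesgue_measure R).-negligible
     [set t : R | 0 < t < 1 /\
        ~ ((forall x, A x -> (@irrational R) (x - t)) /\
           (forall x, A x -> (@irrational R) (x + t)) /\
           (forall x, A x -> x != 0 -> (@irrational R) (x / t)))].
Proof.
move=> m1 sA nd TA.
have hN : (@lebesgue_measure R).-negligible (\bigcup_k \bigcup_v Bset m k v).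
  by apply: negligible_bigcup => k; apply: negligible_bigcup => v; exact: Bset_negl.
apply: (negligibleS _ hN).
move=> t [/andP [t0 t1] hnot].
apply: contrapT => hB; apply: hnot.
suff hg : forall k v, (v < m ^ k)%N -> exists i,
      Num.floor ((m ^ k)%N%:R * fr (((m ^ k)%N%:R) ^+ i * t)) = v%:Z.
  exact: (concl_vis (Nn := fun n => Num.floor (m%:R ^+ n * t)) m1 sA nd TA t0 (good_vis m1 hg)).
move=> k v hv; apply: contrapT => hi; apply: hB.
exists k => //; exists v => //; split => //; split; first by rewrite ltW.
by move=> i; apply/eqP => e; apply: hi; exists i.
Qed.
End P3.

Unset Implicit Arguments.
Theorem theorem1 (R : realType) (m : nat) (A : set R) :
  (2 <= m)%N ->
  A `<=` [set x | 0 <= x < 1] ->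
  nowhere_dense A ->
  mmod1 m @` A `<=` A ->
  (forall t : R, 0 < t < 1 -> has_universal_expansion m t ->
     (forall x, A x -> (@irrational R) (x - t)) /\
     (forall x, A x -> (@irrational R) (x + t)) /\
     (forall x, A x -> x != 0 -> (@irrational R) (x / t))) /\
  (forall t : R, 1 < t -> has_universal_expansion m t^-1 ->
     forall x, A x -> x != 0 -> (@irrational R) (t * x)) /\
  (@lebesgue_measure R).-negligible
     [set t : R | 0 < t < 1 /\
        ~ ((forall x, A x -> (@irrational R) (x - t)) /\
           (forall x, A x -> (@irrational R) (x + t)) /\
           (forall x, A x -> x != 0 -> (@irrational R) (x / t)))].
Proof.
move=> m1 sA nd TA.
have [h1 h2] := part12 m1 sA nd TA.
split; first exact: h1.
split; first exact: h2.
exact: (part3 m1 sA nd TA).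
Qed.
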